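(* Let $\hat V:[0,T]\times\mathbb{R}^n\times\mathbb{R}^n\to\mathbb{R}$, together with a feedback map $\hat\pi:[0,T]\times\mathbb{R}^n\times\mathbb{R}^n\times U\to U$, be a funnel generator function with respect to the time-varying region $R^s(\cdot)$ and level $\beta$ (as defined in the context). Let $(x_r(\cdot),u_r(\cdot))$ be a reference on $[0,T]$ with $x_r$ differentiable, $\dot x_r(t)=f_r(x_r(t),u_r(t))$ and $(x_r(t),u_r(t))\in R^s(t)$ for all $t\in[0,T]$. Define the feedback law $\pi(t,x)=\hat\pi(t,x,x_r(t),u_r(t))$ and the time-varying set $$\mathcal F(t)=\{x\in\mathbb{R}^n : \hat V(t,x,x_r(t))\le\beta\},\qquad t\in[0,T].$$ Then $\mathcal F$ is a funnel (region of finite-time invariance) for the closed-loop system $\dot x=f(x,\pi(t,x))$ that covers the reference: (i) $x_r(t)\in\mathcal F(t)$ for all $t\in[0,T]$; and (ii) for every $t\in[0,T]$ and every closed-loop solution $x(\cdot)$ defined on $[t,T]$, if $x(t)\in\mathcal F(t)$ then $x(t')\in\mathcal F(t')$ for all $t'\in[t,T]$.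
   Context: The plant is $\dot x=f(x,u)$ with state $x\in\mathbb{R}^n$, input $u\in U\subseteq\mathbb{R}^m$, $f$ polynomial. The reference (planning) model is $\dot x_r=f_r(x_r,u_r)$ with $x_r\in\mathbb{R}^n$ (reference state space equals the plant state space) and $u_r\in U$; write $r=(x_r,u_r)$. $T>0$ is a finite horizon and $R^s:[0,T]\to\mathcal P(\mathbb{R}^n\times U)$ is a given time-varying set of admissible reference state–input pairs. Fix $\beta\in\mathbb{R}$. A funnel generator function w.r.t. $R^s(\cdot)$ is a continuously differentiable function $\hat V:[0,T]\times\mathbb{R}^n\times\mathbb{R}^n\to\mathbb{R}$, radially unbounded in $x$, together with a continuous map $\hat\pi:[0,T]\times\mathbb{R}^n\times\mathbb{R}^n\times U\to U$, such that for all $t\in[0,T]$: (1) for all $x\in\mathbb{R}^n$, $\hat V(t,x,x)<\beta$; (2) for all $(x_r,u_r)\in R^s(t)$ and all $x$ with $\hat V(t,x,x_r)=\beta$, $$\frac{d\hat V}{dt}:=\nabla_x\hat V(t,x,x_r)\cdot f\big(x,\hat\pi(t,x,x_r,u_r)\big)+\nabla_{x_r}\hat V(t,x,x_r)\cdot f_r(x_r,u_r)+\frac{\partial\hat V}{\partial t}(t,x,x_r)<0.$$ A funnel is a map $\mathcal F:[0,T]\to\mathcal P(\mathbb{R}^n)$ such that for every $t\in[0,T]$, $x(t)\in\mathcal F(t)$ implies $x(t')\in\mathcal F(t')$ for all $t'\in[t,T]$ along closed-loop trajectories; it covers $x_r(\cdot)$ if $x_r(t)\in\mathcal F(t)$ for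 all $t$. *)

(* Defs.v *)
From Stdlib Require Import Reals Lra.
From Stdlib Require Fin.
Open Scope R_scope.

Definition vec (n : nat) : Type := Fin.t n -> R.

Fixpoint fsum (n : nat) : (Fin.t n -> R) -> R :=
  match n return (Fin.t n -> R) -> R with
  | O => fun _ => 0
  | S k => fun g => g Fin.F1 + fsum k (fun i => g (Fin.FS i))
  end.

Definition vdot {n} (a b : vec n) : R := fsum n (fun i => a i * b i).
Definition vsub {n} (a b : vec n) : vec n := fun i => a i - b i.
Definition vscal {n} (c : R) (a : vec n) : vec n := fun i => c * a i.
Definition vnorm {n} (a : vec n) : R := sqrt (vdot a a).

Definition in_interval (a b t : R) : Prop := a <= t <= b.

Inductive polyfun {n m : nat} : (vec n -> vec m -> R) -> Prop :=
  | pf_const (c : R) : polyfun (fun _ _ => c)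
  | pf_x (i : Fin.t n) : polyfun (fun x _ => x i)
  | pf_u (j : Fin.t m) : polyfun (fun _ u => u j)
  | pf_add p q : polyfun p -> polyfun q -> polyfun (fun x u => p x u + q x u)
  | pf_mul p q : polyfun p -> polyfun q -> polyfun (fun x u => p x u * q x u).

Definition poly_vf {n m} (f : vec n -> vec m -> vec n) : Prop :=
  forall i : Fin.t n, polyfun (fun x u => f x u i).

Definition has_derivs_on {n} (T : R) (V : R -> vec n -> vec n -> R)
  (Vt : R -> vec n -> vec n -> R) (Vx Vxr : R -> vec n -> vec n -> vec n) : Prop :=
  forall t x xr, in_interval 0 T t ->
  forall eps, eps > 0 -> exists delta, delta > 0 /\
  forall s y yr, in_interval 0 T s ->
    Rabs (s - t) + vnorm (vsub y x) + vnorm (vsub yr xr) < delta ->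
    Rabs (V s y yr - V t x xr - Vt t x xr * (s - t)
          - vdot (Vx t x xr) (vsub y x) - vdot (Vxr t x xr) (vsub yr xr))
    <= eps * (Rabs (s - t) + vnorm (vsub y x) + vnorm (vsub yr xr)).

Definition cont_on3 {n k} (T : R) (g : R -> vec n -> vec n -> vec k) : Prop :=
  forall t x xr, in_interval 0 T t ->
  forall eps, eps > 0 -> exists delta, delta > 0 /\
  forall s y yr, in_interval 0 T s ->
    Rabs (s - t) + vnorm (vsub y x) + vnorm (vsub yr xr) < delta ->
    vnorm (vsub (g s y yr) (g t x xr)) < eps.

Definition scalar_as_vec (r : R) : vec 1 := fun _ => r.

Definition C1_on {n} (T : R) (V : R -> vec n -> vec n -> R)
  (Vt : R -> vec n -> vec n -> R) (Vx Vxr : R -> vec n -> vec n -> vec n) : Prop :=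
  has_derivs_on T V Vt Vx Vxr /\
  cont_on3 T (fun t x xr => scalar_as_vec (Vt t x xr)) /\
  cont_on3 T Vx /\ cont_on3 T Vxr.

Definition radially_unbounded {n} (T : R) (V : R -> vec n -> vec n -> R) : Prop :=
  forall t xr, in_interval 0 T t ->
  forall M : R, exists r : R, forall x, vnorm x > r -> V t x xr > M.

Definition cont_pi {n m} (T : R) (U : vec m -> Prop)
  (pih : R -> vec n -> vec n -> vec m -> vec m) : Prop :=
  forall t x xr ur, in_interval 0 T t -> U ur ->
  forall eps, eps > 0 -> exists delta, delta > 0 /\
  forall s y yr vr, in_interval 0 T s -> U vr ->
    Rabs (s - t) + vnorm (vsub y x) + vnorm (vsub yr xr) + vnorm (vsub vr ur) < delta ->
    vnorm (vsub (pih s y yr vr) (pih t x xr ur)) < eps.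

Definition funnel_generator {n m} (T beta : R)
  (f : vec n -> vec m -> vec n) (fr : vec n -> vec m -> vec n)
  (U : vec m -> Prop) (Rs : R -> vec n -> vec m -> Prop)
  (V : R -> vec n -> vec n -> R)
  (Vt : R -> vec n -> vec n -> R) (Vx Vxr : R -> vec n -> vec n -> vec n)
  (pih : R -> vec n -> vec n -> vec m -> vec m) : Prop :=
  C1_on T V Vt Vx Vxr /\
  radially_unbounded T V /\
  (forall t x xr ur, in_interval 0 T t -> U ur -> U (pih t x xr ur)) /\
  cont_pi T U pih /\
  (forall t x, in_interval 0 T t -> V t x x < beta) /\
  (forall t xr ur x, in_interval 0 T t -> Rs t xr ur -> V t x xr = beta ->
     vdot (Vx t x xr) (f x (pih t x xr ur)) + vdot (Vxr t x xr) (fr xr ur)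
     + Vt t x xr < 0).

Definition has_vderiv_on {n} (a b : R) (x x' : R -> vec n) : Prop :=
  forall t, in_interval a b t ->
  forall eps, eps > 0 -> exists delta, delta > 0 /\
  forall s, in_interval a b s -> Rabs (s - t) < delta ->
    vnorm (vsub (vsub (x s) (x t)) (vscal (s - t) (x' t))) <= eps * Rabs (s - t).

(* Main.v *)
Require Import Defs.
From Stdlib Require Import Reals Lra Psatz Classical.
Open Scope R_scope.
Lemma step (x y S P Q : R) : 0 <= P -> 0 <= Q -> S^2 <= P*Q -> (x*y+S)^2 <= (x*x+P)*(y*y+Q).
Proof.
intros HP HQ HS.
assert (H: 2*x*y*S <= x*x*Q + y*y*P).
{ destruct (Req_dec P 0) as [E|E].
  - subst. assert (S = 0) by nra. subst. nra.
  - assert (0 < P) by lra.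
    assert (P*(x*x*Q + y*y*P - 2*x*y*S) >= 0).
    { assert (0 <= (x*S - y*P)^2) by apply pow2_ge_0. assert (0 <= x*x*(P*Q - S^2)) by (apply Rmult_le_pos; nra). nra. }
    nra. }
nra.
Qed.

Lemma fsum_ext n (g h : Fin.t n -> R) : (forall i, g i = h i) -> fsum n g = fsum n h.
Proof. induction n; simpl; intros; auto. rewrite H. f_equal. apply IHn. auto. Qed.

Lemma fsum_plus n (g h : Fin.t n -> R) : fsum n (fun i => g i + h i) = fsum n g + fsum n h.
Proof. induction n; simpl; [lra|]. rewrite (IHn (fun i => g (Fin.FS i)) (fun i => h (Fin.FS i))). lra. Qed.

Lemma fsum_scal n c (g : Fin.t n -> R) : fsum n (fun i => c * g i) = c * fsum n g.
Proof. induction n; simpl; [lra|]. rewrite (IHn (fun i => g (Fin.FS i))). lra. Qed.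

Lemma fsum_sq_nonneg n (g : Fin.t n -> R) : 0 <= fsum n (fun i => g i * g i).
Proof. induction n; simpl; [lra|]. specialize (IHn (fun i => g (Fin.FS i))). nra. Qed.

Lemma fsum_CS n (u w : Fin.t n -> R) :
  (fsum n (fun i => u i * w i))^2 <= fsum n (fun i => u i * u i) * fsum n (fun i => w i * w i).
Proof. induction n; simpl; [lra|].
apply step; [apply fsum_sq_nonneg|apply fsum_sq_nonneg|apply IHn]. Qed.

Lemma vdot_nonneg {n} (a : vec n) : 0 <= vdot a a.
Proof. apply fsum_sq_nonneg. Qed.

Lemma vnorm_nonneg {n} (a : vec n) : 0 <= vnorm a.
Proof. apply sqrt_pos. Qed.

Lemma vdot_sym {n} (a b : vec n) : vdot a b = vdot b a.
Proof. unfold vdot. apply fsum_ext. intros; lra. Qed.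

Lemma vdot_sub_r {n} (u a b : vec n) : vdot u (vsub a b) = vdot u a - vdot u b.
Proof. unfold vdot, vsub.
replace (fsum n (fun i => u i * b i)) with (- fsum n (fun i => (-1) * (u i * b i))) .
2:{ rewrite fsum_scal. lra. }
rewrite <- (Ropp_involutive (fsum n (fun i : Fin.t n => -1 * (u i * b i)))).
rewrite Ropp_involutive. unfold Rminus. rewrite Ropp_involutive.
rewrite <- fsum_plus. apply fsum_ext. intros; lra. Qed.

Lemma vdot_scal_r {n} (u a : vec n) c : vdot u (vscal c a) = c * vdot u a.
Proof. unfold vdot, vscal. rewrite <- fsum_scal. apply fsum_ext. intros; lra. Qed.

Lemma vdot_add {n} (a b : vec n) :
  vdot (fun i => a i + b i) (fun i => a i + b i) = vdot a a + 2 * vdot a b + vdot b b.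
Proof. unfold vdot. rewrite <- (fsum_scal n 2), <- !fsum_plus. apply fsum_ext. intros; lra. Qed.

Lemma CS {n} (u w : vec n) : Rabs (vdot u w) <= vnorm u * vnorm w.
Proof. unfold vnorm. rewrite <- sqrt_mult by apply vdot_nonneg.
rewrite <- sqrt_Rsqr_abs. apply sqrt_le_1_alt. unfold Rsqr.
pose proof (fsum_CS n u w). unfold vdot. simpl in H. lra. Qed.

Lemma vnorm_scal {n} c (a : vec n) : vnorm (vscal c a) = Rabs c * vnorm a.
Proof. unfold vnorm. 
replace (vdot (vscal c a) (vscal c a)) with (c*c * vdot a a).
2:{ unfold vdot, vscal. rewrite <- fsum_scal. apply fsum_ext. intros; lra. }
rewrite sqrt_mult. 2: (pose proof (Rle_0_sqr c); unfold Rsqr in *; lra). 2: apply vdot_nonneg.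
f_equal. rewrite <- sqrt_Rsqr_abs. reflexivity. Qed.

Lemma vnorm_tri {n} (a c : vec n) : vnorm a <= vnorm (vsub a c) + vnorm c.
Proof.
set (d := vsub a c).
assert (E: vdot a a = vdot (fun i => d i + c i) (fun i => d i + c i)).
{ unfold vdot, d, vsub. apply fsum_ext. intros; ring. }
unfold vnorm at 1. rewrite E, vdot_add.
pose proof (CS d c). pose proof (vnorm_nonneg d). pose proof (vnorm_nonneg c).
rewrite <- (sqrt_Rsqr (vnorm d + vnorm c)) by lra.
apply sqrt_le_1_alt. unfold Rsqr.
assert (vnorm d * vnorm d = vdot d d) by (unfold vnorm; apply sqrt_sqrt, vdot_nonneg).
assert (vnorm c * vnorm c = vdot c c) by (unfold vnorm; apply sqrt_sqrt, vdot_nonneg).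
pose proof (Rle_abs (vdot d c)). nra.
Qed.
Definition rderiv (a b : R) (g d : R -> R) : Prop :=
  forall s, a <= s <= b -> forall eps, eps > 0 -> exists delta, delta > 0 /\
  forall s', a <= s' <= b -> Rabs (s' - s) < delta ->
  Rabs (g s' - g s - d s * (s' - s)) <= eps * Rabs (s' - s).


Lemma chain n T V Vt Vx Vxr t0 (x xr x' xr' : R -> vec n) :
  has_derivs_on T V Vt Vx Vxr -> 0 <= t0 -> has_vderiv_on t0 T x x' -> has_vderiv_on 0 T xr xr' ->
  rderiv t0 T (fun s => V s (x s) (xr s))
    (fun s => Vt s (x s) (xr s) + vdot (Vx s (x s) (xr s)) (x' s) + vdot (Vxr s (x s) (xr s)) (xr' s)).
Proof.
intros HV Ht0 Hx Hxr s Hs eps Heps.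
set (p := vnorm (x' s)). set (q := vnorm (xr' s)).
set (A := vnorm (Vx s (x s) (xr s))). set (B := vnorm (Vxr s (x s) (xr s))).
assert (Hp: 0 <= p) by apply vnorm_nonneg. assert (Hq: 0 <= q) by apply vnorm_nonneg.
assert (HA: 0 <= A) by apply vnorm_nonneg. assert (HB: 0 <= B) by apply vnorm_nonneg.
set (L := 3 + p + q).
assert (HL: 0 < L) by (unfold L; lra).
set (e1 := eps / (2 * L)).
assert (He1: e1 > 0) by (unfold e1; apply Rdiv_lt_0_compat; lra).
set (e2 := Rmin 1 (eps / (4 * (A + B + 1)))).
assert (He2: e2 > 0) by (unfold e2; apply Rmin_pos; [lra| apply Rdiv_lt_0_compat; lra]).
assert (He2a: e2 <= 1) by apply Rmin_l.
assert (He2b: e2 <= eps / (4 * (A + B + 1))) by apply Rmin_r.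
assert (Hs0 : in_interval 0 T s) by (unfold in_interval; lra).
destruct (HV s (x s) (xr s) Hs0 e1 He1) as [d1 [Hd1 HV1]].
destruct (Hx s Hs e2 He2) as [d2 [Hd2 Hx1]].
destruct (Hxr s Hs0 e2 He2) as [d3 [Hd3 Hxr1]].
exists (Rmin d2 (Rmin d3 (d1 / L))). split.
{ apply Rmin_pos; auto. apply Rmin_pos; auto. apply Rdiv_lt_0_compat; lra. }
intros s' Hs' Hh.
assert (h2: Rabs (s'-s) < d2) by (eapply Rlt_le_trans; [apply Hh|apply Rmin_l]).
assert (h3': Rmin d3 (d1 / L) <= d3) by apply Rmin_l.
assert (h1': Rmin d3 (d1 / L) <= d1 / L) by apply Rmin_r.
assert (h0: Rmin d2 (Rmin d3 (d1 / L)) <= Rmin d3 (d1 / L)) by apply Rmin_r.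
set (h := s' - s) in *.
assert (Hhp: 0 <= Rabs h) by apply Rabs_pos.
assert (Hs0' : in_interval 0 T s') by (unfold in_interval in *; lra).
specialize (Hx1 s' Hs' h2).
assert (h3: Rabs h < d3) by lra. specialize (Hxr1 s' Hs0' h3). change (s' - s) with h in Hx1, Hxr1.
set (a := vsub (x s') (x s)) in *.
set (b := vsub (xr s') (xr s)) in *.
assert (Ha: vnorm a <= (1 + p) * Rabs h).
{ pose proof (vnorm_tri a (vscal h (x' s))). rewrite vnorm_scal in H. fold p in H. assert (e2 * Rabs h <= 1 * Rabs h) by (apply Rmult_le_compat_r; lra). lra. }
assert (Hb: vnorm b <= (1 + q) * Rabs h).
{ pose proof (vnorm_tri b (vscal h (xr' s))). rewrite vnorm_scal in H. fold q in H. assert (e2 * Rabs h <= 1 * Rabs h) by (apply Rmult_le_compat_r; lra). lra. }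
assert (HLh: Rabs h + vnorm a + vnorm b <= L * Rabs h) by (unfold L; lra).
assert (Hlt: Rabs h + vnorm a + vnorm b < d1).
{ assert (L * Rabs h < d1).
  { assert (Rabs h < d1 / L) by lra. apply (Rmult_lt_compat_l L) in H; auto.
    replace (L * (d1 / L)) with d1 in H by (field; lra). lra. }
  lra. }
specialize (HV1 s' (x s') (xr s') Hs0' Hlt).
fold a b in HV1. change (s' - s) with h in HV1.
pose proof (CS (Vx s (x s) (xr s)) (vsub a (vscal h (x' s)))) as C1.
pose proof (CS (Vxr s (x s) (xr s)) (vsub b (vscal h (xr' s)))) as C2.
rewrite vdot_sub_r, vdot_scal_r in C1, C2. fold A in C1. fold B in C2.
set (G := V s' (x s') (xr s') - V s (x s) (xr s) - Vt s (x s) (xr s) * h -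
       vdot (Vx s (x s) (xr s)) a - vdot (Vxr s (x s) (xr s)) b) in HV1.
set (G1 := vdot (Vx s (x s) (xr s)) a - h * vdot (Vx s (x s) (xr s)) (x' s)) in C1.
set (G2 := vdot (Vxr s (x s) (xr s)) b - h * vdot (Vxr s (x s) (xr s)) (xr' s)) in C2.
replace (V s' (x s') (xr s') - V s (x s) (xr s) -
   (Vt s (x s) (xr s) + vdot (Vx s (x s) (xr s)) (x' s) + vdot (Vxr s (x s) (xr s)) (xr' s)) * h)
  with (G + G1 + G2) by (unfold G, G1, G2; ring).
pose proof (Rabs_triang (G + G1) G2). pose proof (Rabs_triang G G1).
assert (e1 * (Rabs h + vnorm a + vnorm b) <= eps / 2 * Rabs h).
{ apply Rle_trans with (e1 * (L * Rabs h)). apply Rmult_le_compat_l; lra.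
  unfold e1. right. field. lra. }
assert (A * (e2 * Rabs h) + B * (e2 * Rabs h) <= eps / 4 * Rabs h).
{ replace (A * (e2 * Rabs h) + B * (e2 * Rabs h)) with ((A + B) * e2 * Rabs h) by ring.
  apply Rmult_le_compat_r; auto.
  apply Rle_trans with ((A+B) * (eps / (4 * (A + B + 1)))). apply Rmult_le_compat_l; lra.
  apply Rle_trans with ((A+B+1) * (eps / (4 * (A + B + 1)))).
  apply Rmult_le_compat_r. left; apply Rdiv_lt_0_compat; lra. lra.
  right. field. lra. }
assert (A * vnorm (vsub a (vscal h (x' s))) <= A * (e2 * Rabs h)) by (apply Rmult_le_compat_l; auto).
assert (B * vnorm (vsub b (vscal h (xr' s))) <= B * (e2 * Rabs h)) by (apply Rmult_le_compat_l; auto).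
assert (0 <= eps * Rabs h) by (apply Rmult_le_pos; lra). lra.
Qed.
Lemma rderiv_cont a b g d : rderiv a b g d -> forall s, a <= s <= b ->
  forall e, e > 0 -> exists delta, delta > 0 /\
  forall s', a <= s' <= b -> Rabs (s' - s) < delta -> Rabs (g s' - g s) < e.
Proof.
intros H s Hs e He. destruct (H s Hs 1 ltac:(lra)) as [dl [Hdl Hd]].
set (K := Rabs (d s) + 1).
assert (HK: 0 < K) by (unfold K; pose proof (Rabs_pos (d s)); lra).
exists (Rmin dl (e / K)). split.
{ apply Rmin_pos; auto. apply Rdiv_lt_0_compat; lra. }
intros s' Hs' Hh.
assert (h1: Rabs (s'-s) < dl) by (eapply Rlt_le_trans; [apply Hh|apply Rmin_l]).
assert (h2: Rabs (s'-s) < e/K) by (eapply Rlt_le_trans; [apply Hh|apply Rmin_r]).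
specialize (Hd s' Hs' h1).
assert (Rabs (d s * (s'-s)) = Rabs (d s) * Rabs (s'-s)) by apply Rabs_mult.
pose proof (Rabs_triang (g s' - g s - d s * (s'-s)) (d s * (s'-s))).
replace (g s' - g s - d s * (s' - s) + d s * (s' - s)) with (g s' - g s) in H1 by ring.
assert (K * Rabs (s'-s) < e).
{ apply (Rmult_lt_compat_l K) in h2; auto. replace (K * (e/K)) with e in h2 by (field; lra). lra. }
unfold K in H2. lra.
Qed.

Lemma barrier a b beta g d : a <= b -> rderiv a b g d -> g a <= beta ->
  (forall s, a <= s <= b -> g s = beta -> d s < 0) ->
  forall t, a <= t <= b -> g t <= beta.
Proof.
intros Hab Hd Ha Hbar t1 Ht1.
destruct (Rle_or_lt (g t1) beta) as [|Hgt]; auto. exfalso.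
set (E := fun s => a <= s <= t1 /\ g s <= beta).
destruct (completeness E) as [ss [Hub Hlub]].
{ exists t1. intros y [Hy _]. lra. }
{ exists a. split; [lra|auto]. }
assert (HaE: E a) by (split; [lra|auto]).
assert (Hs1: a <= ss) by (apply Hub; auto).
assert (Hs2: ss <= t1) by (apply Hlub; intros y [Hy _]; lra).
assert (Hsab: a <= ss <= b) by lra.
assert (Hle: g ss <= beta).
{ destruct (Rle_or_lt (g ss) beta) as [|Hc]; auto. exfalso.
  destruct (rderiv_cont a b g d Hd ss Hsab (g ss - beta) ltac:(lra)) as [dl [Hdl Hc2]].
  destruct (Rle_or_lt ss a) as [Hsa|Hsa].
  - assert (ss = a) by lra. subst ss. lra.
  -
    assert (exists e, E e /\ ss - dl < e).
    { apply NNPP. intro Hn. assert (ss <= ss - dl) . 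
      { apply Hlub. intros y Hy. destruct (Rle_or_lt y (ss - dl)); auto. exfalso. apply Hn. exists y; auto. }
      lra. }
    destruct H as [e [[He1 He2] He3]].
    assert (e <= ss) by (apply Hub; split; auto).
    assert (Rabs (e - ss) < dl) by (rewrite Rabs_left1; lra).
    specialize (Hc2 e ltac:(lra) H0).
    pose proof (Rle_abs (g ss - g e)). rewrite Rabs_minus_sym in Hc2. lra. }
assert (Hlt: ss < t1) by (destruct (Req_dec ss t1); [subst; lra|lra]).
assert (exists s', ss < s' <= t1 /\ g s' <= beta).
{ destruct (Rle_lt_or_eq_dec _ _ Hle) as [Hl|Heq].
  - destruct (rderiv_cont a b g d Hd ss Hsab (beta - g ss) ltac:(lra)) as [dl [Hdl Hc2]].
    exists (Rmin (ss + dl/2) t1). 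
    assert (ss < Rmin (ss + dl/2) t1) by (apply Rmin_glb_lt; lra).
    assert (Rmin (ss + dl/2) t1 <= ss + dl/2) by apply Rmin_l.
    assert (Rmin (ss + dl/2) t1 <= t1) by apply Rmin_r.
    split; [lra|].
    assert (Rabs (Rmin (ss + dl/2) t1 - ss) < dl) by (rewrite Rabs_right; lra).
    specialize (Hc2 (Rmin (ss + dl/2) t1) ltac:(lra) H2). pose proof (Rle_abs (g (Rmin (ss + dl / 2) t1) - g ss)). lra.
  - pose proof (Hbar ss Hsab Heq) as Hds.
    destruct (Hd ss Hsab (- d ss / 2) ltac:(lra)) as [dl [Hdl Hc2]].
    set (s' := Rmin (ss + dl/2) t1).
    exists s'.
    assert (ss < s') by (apply Rmin_glb_lt; lra).
    assert (s' <= ss + dl/2) by apply Rmin_l.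
    assert (s' <= t1) by apply Rmin_r.
    split; [lra|].
    assert (Rabs (s' - ss) < dl) by (rewrite Rabs_right; lra).
    specialize (Hc2 s' ltac:(lra) H2). rewrite (Rabs_right (s' - ss)) in Hc2 by lra.
    pose proof (Rle_abs (g s' - g ss - d ss * (s' - ss))).
    assert (d ss * (s' - ss) < 0) by (apply Rmult_neg_pos ; lra) || nra.
    nra. }
destruct H as [s' [Hs'1 Hs'2]].
assert (s' <= ss) by (apply Hub; split; [lra|auto]). lra.
Qed.

Theorem mainTheorem1 (n m : nat) (T beta : R)
  (f fr : vec n -> vec m -> vec n) (U : vec m -> Prop)
  (Rs : R -> vec n -> vec m -> Prop)
  (V : R -> vec n -> vec n -> R)
  (Vt : R -> vec n -> vec n -> R) (Vx Vxr : R -> vec n -> vec n -> vec n)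
  (pih : R -> vec n -> vec n -> vec m -> vec m)
  (xr : R -> vec n) (ur : R -> vec m) :
  T > 0 ->
  poly_vf f ->
  (forall t x u, Rs t x u -> U u) ->
  funnel_generator T beta f fr U Rs V Vt Vx Vxr pih ->
  has_vderiv_on 0 T xr (fun t => fr (xr t) (ur t)) ->
  (forall t, in_interval 0 T t -> Rs t (xr t) (ur t)) ->
  (forall t, in_interval 0 T t -> V t (xr t) (xr t) <= beta) /\
  (forall t0 (x : R -> vec n), in_interval 0 T t0 ->
     has_vderiv_on t0 T x (fun s => f (x s) (pih s (x s) (xr s) (ur s))) ->
     V t0 (x t0) (xr t0) <= beta ->
     forall t', in_interval t0 T t' -> V t' (x t') (xr t') <= beta).
Proof.
intros HT Hpoly HRU [[HV _] [_ [_ [_ [Hdiag Hdec]]]]] Hxr HRs.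
split.
{ intros t Ht. left. apply Hdiag; auto. }
intros t0 x Ht0 Hx H0 t' Ht'.
unfold in_interval in *.
pose proof (chain n T V Vt Vx Vxr t0 x xr _ _ HV ltac:(lra) Hx Hxr) as Hc.
apply (barrier t0 T beta (fun s => V s (x s) (xr s)) _ ltac:(lra) Hc H0); auto.
intros s Hs Heq.
assert (Hs0: in_interval 0 T s) by (unfold in_interval; lra).
pose proof (Hdec s (xr s) (ur s) (x s) Hs0 (HRs s Hs0) Heq). lra.
Qed.
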